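(* Suppose the loss has the form $\ell(z,\theta)=q(\theta)\cdot\phi(z)$ for functions $q:\Theta\to\mathbb{R}^k$ and $\phi:\mathcal{Z}\to\mathbb{R}^k$. Suppose further that there exist constants $n_0$ and $\phi_0\in\mathbb{R}^k$ such that, for any training set $Z=\{z_1,\dots,z_n\}$ with $Z\sim\mathcal{D}^n$ and $\mathcal{D}\sim\mathcal{D}_1$, \[ \mathbb{E}_{\mathcal{D}\sim\mathcal{D}_1}\big[\mathbb{E}_{z\sim\mathcal{D}}[\phi(z)]\,\big|\,Z\big]=\frac{\phi_0+\sum_{i=1}^n\phi(z_i)}{n+n_0}. \] Then $R^*(\theta)=\frac1n q(\theta)\cdot\phi_0$ is a perfect, Bayes-optimal regularizer.
   Context: The data distribution $\mathcal{D}$ over examples $z\in\mathcal{Z}$ is itself drawn from a prior $\mathcal{D}_1$ over distributions. The training loss is $\hat L(\theta)=\frac1n\sum_{i=1}^n\ell(z_i,\theta)$, and $L(\theta,\mathcal{D})=\mathbb{E}_{z\sim\mathcal{D}}[\ell(z,\theta)]$. The conditional expected test loss is $\bar L(\theta,Z)=\mathbb{E}_{\mathcal{D}\sim\mathcal{D}_1}[L(\theta,\mathcal{D})\mid Z]$. A regularizer $R^*$ is Bayes-optimal if $\arg\min_{\theta\in\Theta}\{\hat L(\theta)+R^*(\theta)\}=\arg\min_{\theta\in\Theta}\{\bar L(\theta,Z)\}$. It is perfect if, in addition, $\hat L(\theta)+R^*(\theta)=h(\bar L(\theta,Z))$ for all $\theta\in\Theta$, for some monotone function $h$. *)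

(* Defs.v *)
From HB Require Import structures.
From mathcomp Require Import all_boot all_order all_algebra.
From mathcomp Require Import all_classical all_reals all_analysis.
Set Implicit Arguments. Unset Strict Implicit. Unset Printing Implicit Defensive.
Import Order.TTheory GRing.Theory Num.Theory.
Local Open Scope classical_set_scope.
Local Open Scope ring_scope.

Section Defs.
Context {R : realType}.

Definition dotk (k : nat) (u v : 'I_k -> R) : R := \sum_(i < k) u i * v i.

Definition train_loss {Z Theta : Type} (ell : Z -> Theta -> R)
  (Zs : seq Z) (theta : Theta) : R :=
  (size Zs)%:R^-1 * \sum_(z <- Zs) ell z theta.

(* L(theta, D) = E_{z ~ D} [ l(z, theta) ] ; D is an index of the
   distribution family [dist] *)
Definition test_loss {dZ dD : measure_display} {Z : measurableType dZ}
  {Dset : measurableType dD} {Theta : Type}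
  (dist : Dset -> probability Z R) (ell : Z -> Theta -> R)
  (theta : Theta) (D : Dset) : R :=
  Rintegral (dist D) setT (fun z => ell z theta).

(* conditional expected test loss  Lbar(theta, Z) = E_{D ~ D1}[L(theta,D) | Z],
   the conditional expectation given the training set being the integral
   against the posterior [post Zs] of D1 given Zs *)
Definition cond_test_loss {dZ dD : measure_display} {Z : measurableType dZ}
  {Dset : measurableType dD} {Theta : Type}
  (post : seq Z -> probability Dset R) (dist : Dset -> probability Z R)
  (ell : Z -> Theta -> R) (Zs : seq Z) (theta : Theta) : R :=
  Rintegral (post Zs) setT (test_loss dist ell theta).

Definition argmin {Theta : Type} (f : Theta -> R) : set Theta :=
  [set t | forall t', f t <= f t'].

Definition bayes_optimal {dZ dD : measure_display} {Z : measurableType dZ}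
  {Dset : measurableType dD} {Theta : Type}
  (post : seq Z -> probability Dset R) (dist : Dset -> probability Z R)
  (ell : Z -> Theta -> R) (Zs : seq Z) (Rs : Theta -> R) : Prop :=
  argmin (fun theta => train_loss ell Zs theta + Rs theta)
  = argmin (cond_test_loss post dist ell Zs).

(* monotone = strictly increasing *)
Definition perfect {dZ dD : measure_display} {Z : measurableType dZ}
  {Dset : measurableType dD} {Theta : Type}
  (post : seq Z -> probability Dset R) (dist : Dset -> probability Z R)
  (ell : Z -> Theta -> R) (Zs : seq Z) (Rs : Theta -> R) : Prop :=
  bayes_optimal post dist ell Zs Rs /\
  exists h : R -> R, {homo h : x y / x < y} /\
    forall theta, train_loss ell Zs theta + Rs theta
                  = h (cond_test_loss post dist ell Zs theta).

End Defs.

(* Main.v *)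
Require Import Defs.
From HB Require Import structures.
From mathcomp Require Import all_boot all_order all_algebra.
From mathcomp Require Import all_classical all_reals all_analysis.
From mathcomp Require Import ring lra.
Import Order.TTheory GRing.Theory Num.Theory.
Local Open Scope classical_set_scope.
Local Open Scope ring_scope.


Lemma Rintegral_sum_seq d (T : measurableType d) (R : realType)
  (mu : {measure set T -> \bar R}) (D : set T) (mD : measurable D)
  I (s : seq I) (f : I -> T -> R) :
  (forall i, mu.-integrable D (EFin \o f i)) ->
  Rintegral mu D (fun x => \sum_(i <- s) f i x) = \sum_(i <- s) Rintegral mu D (f i).
Proof.
move=> fi; elim: s => [|i s IH].
  under eq_Rintegral do rewrite big_nil.
  by rewrite big_nil Rintegral_cst // mul0r.
under eq_Rintegral do rewrite big_cons.
rewrite big_cons RintegralD //; first by rewrite IH.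
have -> : (EFin \o (fun x => \sum_(j <- s) f j x)) =
          (fun x => \sum_(j <- s) (EFin \o f j) x)%E.
  by apply/funext=> x /=; rewrite sumEFin.
by apply: (@integrable_sum _ _ _ mu D mD) => j _; exact: fi.
Qed.

Lemma integrable_scale d (T : measurableType d) (R : realType)
  (mu : {measure set T -> \bar R}) (D : set T) (mD : measurable D) (c : R) (g : T -> R) :
  mu.-integrable D (EFin \o g) -> mu.-integrable D (EFin \o (fun x => c * g x)).
Proof.
move=> h; have -> : (EFin \o (fun x => c * g x)) = (fun x => c%:E * (EFin \o g) x)%E.
  by apply/funext => x /=; rewrite EFinM.
exact: (integrableZl mD).
Qed.

Theorem lemma1 (R : realType) (dZ dD : measure_display)
  (Z : measurableType dZ) (Dset : measurableType dD) (Theta : Type)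
  (dist : Dset -> probability Z R) (post : seq Z -> probability Dset R)
  (k : nat) (q : Theta -> 'I_k -> R) (phi : Z -> 'I_k -> R)
  (ell : Z -> Theta -> R)
  (n0 : R) (phi0 : 'I_k -> R) :
  (forall z theta, ell z theta = dotk (q theta) (phi z)) ->
  (forall D i, (dist D).-integrable setT (fun z => (phi z i)%:E)) ->
  (forall Zs i, (post Zs).-integrable setT
      (fun D => (Rintegral (dist D) setT (fun z => phi z i))%:E)) ->
  -1 < n0 ->
  (forall Zs i,
      Rintegral (post Zs) setT (fun D => Rintegral (dist D) setT (fun z => phi z i))
      = (phi0 i + \sum_(z <- Zs) phi z i) / ((size Zs)%:R + n0)) ->
  forall Zs : seq Z, (0 < size Zs)%N ->
    perfect post dist ell Zs
      (fun theta => (size Zs)%:R^-1 * dotk (q theta) phi0).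
Proof.
move=> hell hint hpint hn0 hpost Zs hn.
set n := (size Zs)%:R.
set S := fun i => phi0 i + \sum_(z <- Zs) phi z i.
have npos : 0 < n by rewrite /n ltr0n.
have nn0 : 0 < n + n0.
  have : 1 <= n by rewrite /n ler1n.
  move=> h1; clear -h1 hn0; lra.
have Htr : forall th, train_loss ell Zs th + n^-1 * dotk (q th) phi0
                     = n^-1 * dotk (q th) S.
  move=> th; rewrite /train_loss -/n -mulrDr; congr (_ * _).
  rewrite /dotk /S.
  under eq_bigr do rewrite hell /dotk.
  under [RHS]eq_bigr do rewrite mulrDr mulr_sumr.
  by rewrite big_split /= addrC exchange_big.
have Hct : forall th, cond_test_loss post dist ell Zs th
                     = (n + n0)^-1 * dotk (q th) S.
  move=> th; rewrite /cond_test_loss /test_loss.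
  under eq_Rintegral => D _.
    under eq_Rintegral do rewrite hell /dotk.
    rewrite Rintegral_sum_seq //; last first.
      by move=> i; apply: integrable_scale => //; exact: (hint D i).
    under eq_bigr => i _ do rewrite (RintegralZl _ measurableT (hint D i)).
    over.
  rewrite Rintegral_sum_seq //; last first.
    by move=> i; apply: integrable_scale => //; exact: (hpint Zs i).
  under eq_bigr => i _ do rewrite (RintegralZl _ measurableT (hpint Zs i)) hpost.
  rewrite /dotk mulr_sumr; apply: eq_bigr => i _.
  by rewrite /S mulrA mulrC.
set c := (n + n0) / n.
have cpos : 0 < c by rewrite /c divr_gt0.
have Hrel : forall th, train_loss ell Zs th + n^-1 * dotk (q th) phi0
                      = c * cond_test_loss post dist ell Zs th.
  have ce : c * (n + n0)^-1 = n^-1.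
    by rewrite /c mulrAC divff ?mul1r // gt_eqF.
  by move=> th; rewrite Htr Hct mulrA ce.
split.
  rewrite /bayes_optimal /argmin; apply/seteqP; split => t /= H t'.
    by have := H t'; rewrite !Hrel ler_pM2l.
  by rewrite !Hrel ler_pM2l.
exists (fun x => c * x); split.
  by move=> x y xy /=; rewrite ltr_pM2l.
exact: Hrel.
Qed.
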